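(* Let $L>0$ and let $f:\mathbb{R}\times\mathbb{R}\to\mathbb{R}$ be continuous, $L$-periodic in the first argument, and continuously differentiable in the second argument. Let $\phi:[x_0,+\infty)\to\mathbb{R}$ be a bounded solution of $\phi_{xx}=f(x,\phi)$, and assume $$\min_{x\in[0,L],\ y\in[\inf_{x\ge x_0}\phi(x),\,\sup_{x\ge x_0}\phi(x)]}\frac{\partial f(x,y)}{\partial y}>0 .$$ Then there exists an $L$-periodic solution $\varphi$ of $\varphi_{xx}=f(x,\varphi)$ such that $$\lim_{x\to+\infty}\big(|\phi(x)-\varphi(x)|+|\phi_x(x)-\varphi_x(x)|\big)=0 .$$ *)

(* Defs.v *)
From Stdlib Require Import Reals.
From Coquelicot Require Import Coquelicot.
Open Scope R_scope.

Definition range_from (phi : R -> R) (x0 : R) : R -> Prop :=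
  fun y => exists x, x0 <= x /\ y = phi x.

(* Main.v *)
Require Import Defs.
From Stdlib Require Import Reals.
From Stdlib Require Import Psatz Lra Lia Classical ClassicalEpsilon ZArith.
From Coquelicot Require Import Coquelicot.
Open Scope R_scope.

Lemma derive_cont (g : R -> R) x l : is_derive g x l -> continuity_pt g x.
Proof.
  intro H. apply continuity_pt_filterlim.
  apply (ex_derive_continuous g x). exists l; exact H.
Qed.

Lemma mono_le (g dg : R -> R) a :
  (forall x, a <= x -> is_derive g x (dg x)) ->
  (forall x, a <= x -> 0 <= dg x) ->
  forall x y, a <= x -> x <= y -> g x <= g y.
Proof.
  intros Hd Hp x y Hx Hxy.
  destruct (MVT_gen g x y dg) as [c [Hc E]].
  - intros t Ht. apply Hd. rewrite Rmin_left in Ht by lra. lra.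
  - intros t Ht. apply (derive_cont g t (dg t)). apply Hd.
    rewrite Rmin_left in Ht by lra. lra.
  - rewrite Rmin_left in Hc by lra. rewrite Rmax_right in Hc by lra.
    assert (0 <= dg c) by (apply Hp; lra).
    assert (0 <= dg c * (y - x)) by (apply Rmult_le_pos; lra). lra.
Qed.

Lemma geom_lim (u : nat -> R) c r : 0 <= c -> 0 <= r < 1 ->
  (forall n, Rabs (u (S n) - u n) <= c * r ^ n) ->
  ex_finite_lim_seq u /\ forall n, Rabs (real (Lim_seq u) - u n) <= c * r ^ n / (1 - r).
Proof.
  intros Hc Hr Hu.
  assert (step : forall n j, Rabs (u (j + n)%nat - u n) * (1 - r) <= c * r ^ n * (1 - r ^ j)).
  { intros n j. induction j as [|j IH].
    - simpl. replace (u n - u n) with 0 by ring. rewrite Rabs_R0. lra.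
    - replace (S j + n)%nat with (S (j + n)) by lia.
      assert (H1 := Hu (j + n)%nat).
      assert (Rabs (u (S (j + n)) - u n) <= Rabs (u (S (j + n)) - u (j + n)%nat) + Rabs (u (j+n)%nat - u n)).
      { replace (u (S (j + n)) - u n) with ((u (S (j + n)) - u (j + n)%nat) + (u (j+n)%nat - u n)) by ring.
        apply Rabs_triang. }
      rewrite pow_add in H1. simpl pow.
      assert (0 <= 1 - r) by lra.
      assert (0 <= r ^ n) by (apply pow_le; lra).
      assert (0 <= r ^ j) by (apply pow_le; lra).
      nra. }
  assert (bnd : forall n j, Rabs (u (j + n)%nat - u n) <= c * r ^ n / (1 - r)).
  { intros n j. apply Rmult_le_reg_r with (1 - r). lra.
    unfold Rdiv. rewrite Rmult_assoc, Rinv_l by lra. rewrite Rmult_1_r.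
    assert (H := step n j). assert (0 <= r ^ j) by (apply pow_le; lra).
    assert (0 <= r ^ n) by (apply pow_le; lra).
    assert (0 <= c * r ^ n * r ^ j) by (apply Rmult_le_pos; [apply Rmult_le_pos|]; lra). nra. }
  assert (ex : ex_finite_lim_seq u).
  { apply ex_lim_seq_cauchy_corr. intro eps.
    assert (Hr1 : Rabs r < 1) by (rewrite Rabs_pos_eq; lra).
    destruct (pow_lt_1_zero r Hr1 (eps * (1 - r) / (2 * (c + 1))))
      as [N HN].
    { apply Rdiv_lt_0_compat. apply Rmult_lt_0_compat. apply cond_pos. lra. lra. }
    exists N. intros n m Hn Hm.
    assert (A1 := bnd N (n - N)%nat). assert (A2 := bnd N (m - N)%nat).
    replace (n - N + N)%nat with n in A1 by lia.
    replace (m - N + N)%nat with m in A2 by lia.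
    assert (B := HN N (le_n N)). rewrite Rabs_pos_eq in B by (apply pow_le; lra).
    assert (c * r ^ N / (1 - r) < eps / 2).
    { apply Rmult_lt_reg_r with (1 - r). lra.
      unfold Rdiv. rewrite Rmult_assoc, Rinv_l by lra. rewrite Rmult_1_r.
      apply Rmult_lt_reg_r with (2 * (c+1)). lra.
      assert (r ^ N * (2 * (c + 1)) < eps * (1 - r)).
      { apply Rmult_lt_reg_r with (/ (2 * (c+1))). apply Rinv_0_lt_compat; lra.
        rewrite Rmult_assoc, Rinv_r by lra. rewrite Rmult_1_r. exact B. }
      assert (0 <= r ^ N) by (apply pow_le; lra).
      destruct eps as [e He]; simpl in *. nra. }
    replace (u n - u m) with ((u n - u N) - (u m - u N)) by ring.
    eapply Rle_lt_trans. apply Rabs_triang. rewrite Rabs_Ropp.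
    destruct eps as [e He]; simpl in *. lra. }
  split; [exact ex|]. intro n.
  destruct ex as [l Hl]. rewrite (is_lim_seq_unique _ _ Hl). simpl.
  assert (Hl' : is_lim_seq (fun j => u (j + n)%nat) l).
  { apply (is_lim_seq_incr_n u n l). exact Hl. }
  assert (Hc' := is_lim_seq_const (u n + c * r ^ n / (1 - r))).
  assert (Hc'' := is_lim_seq_const (u n - c * r ^ n / (1 - r))).
  apply Rabs_le_between'.
  split.
  - assert (H := is_lim_seq_le (fun _ => u n - c * r ^ n / (1 - r)) (fun j => u (j + n)%nat) _ _
      (fun j => proj1 (proj1 (Rabs_le_between' _ _ _) (bnd n j))) Hc'' Hl'). simpl in H. lra.
  - assert (H := is_lim_seq_le (fun j => u (j + n)%nat) (fun _ => u n + c * r ^ n / (1 - r)) _ _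
      (fun j => proj2 (proj1 (Rabs_le_between' _ _ _) (bnd n j))) Hl' Hc'). simpl in H. lra.
Qed.

Lemma cont2_delta (g : R -> R -> R) u v :
  continuous (fun p : R * R => g (fst p) (snd p)) (u, v) ->
  exists d, 0 < d /\ forall x y, Rabs (x - u) < d -> Rabs (y - v) < d ->
    Rabs (g x y - g u v) < 1.
Proof.
  intro H.
  assert (H1 := H (ball (g u v) (mkposreal 1 Rlt_0_1)) (locally_ball _ _)).
  destruct H1 as [e He]. exists e. split. apply cond_pos.
  intros x y Hx Hy. apply (He (x, y)). split; simpl; exact Hx || exact Hy.
Qed.

Lemma rect_bound (g : R -> R -> R) :
  (forall x y, continuous (fun p : R * R => g (fst p) (snd p)) (x, y)) ->
  forall a b c d, exists K, forall x y, a <= x <= b -> c <= y <= d -> Rabs (g x y) <= K.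
Proof.
  intros Hg a b c d.
  pose (dd := fun u v => proj1_sig (constructive_indefinite_description _ (cont2_delta g u v (Hg u v)))).
  assert (Hdd : forall u v, 0 < dd u v /\ forall x y, Rabs (x - u) < dd u v -> Rabs (y - v) < dd u v ->
    Rabs (g x y - g u v) < 1).
  { intros u v. unfold dd. destruct (constructive_indefinite_description _ _) as [e He]. exact He. }
  pose (delta := fun u v => mkposreal (dd u v / 2) ltac:(destruct (Hdd u v); lra)).
  destruct (compactness_value_2d a b c d delta) as [e He].
  assert (close : forall x y x' y', a <= x <= b -> c <= y <= d ->
     Rabs (x' - x) < e -> Rabs (y' - y) < e -> Rabs (g x' y' - g x y) < 2).
  { intros x y x' y' Hx Hy Hx' Hy'. apply NNPP. intro Hn.
    apply (He x y Hx Hy). intros [u [v [Hu [Hv [Hxu [Hyv Hle]]]]]]. apply Hn.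
    simpl in Hxu, Hyv, Hle. destruct (Hdd u v) as [Hpos Hb].
    assert (A1 := Hb x y ltac:(lra) ltac:(lra)).
    assert (A2 : Rabs (g x' y' - g u v) < 1).
    { apply Hb.
      - replace (x' - u) with ((x' - x) + (x - u)) by ring.
        eapply Rle_lt_trans. apply Rabs_triang. lra.
      - replace (y' - v) with ((y' - y) + (y - v)) by ring.
        eapply Rle_lt_trans. apply Rabs_triang. lra. }
    replace (g x' y' - g x y) with ((g x' y' - g u v) - (g x y - g u v)) by ring.
    eapply Rle_lt_trans. apply Rabs_triang. rewrite Rabs_Ropp. lra. }
  destruct (archimed ((Rabs (b - a) + Rabs (d - c)) / e)) as [Hup _].
  set (N := S (Z.to_nat (up ((Rabs (b - a) + Rabs (d - c)) / e)))).
  assert (HN : (Rabs (b - a) + Rabs (d - c)) / e < INR N).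
  { unfold N. rewrite S_INR. 
    destruct (Z_le_gt_dec 0%Z (up ((Rabs (b - a) + Rabs (d - c)) / e))) as [Hz|Hz].
    - rewrite INR_IZR_INZ, Z2Nat.id by exact Hz. lra.
    - assert (IZR (up ((Rabs (b - a) + Rabs (d - c)) / e)) <= 0).
      { apply IZR_le. lia. }
      assert (0 <= INR (Z.to_nat (up ((Rabs (b - a) + Rabs (d - c)) / e)))) by apply pos_INR.
      lra. }
  assert (HNpos : 0 < INR N) by (unfold N; rewrite S_INR; assert (H0 := pos_INR (Z.to_nat (up ((Rabs (b - a) + Rabs (d - c)) / e)))); lra).
  assert (He0 : 0 < e) by apply cond_pos.
  assert (HNe : Rabs (b - a) + Rabs (d - c) < INR N * e).
  { apply Rmult_lt_reg_r with (/ e). apply Rinv_0_lt_compat; lra.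
    rewrite Rmult_assoc, Rinv_r by lra. rewrite Rmult_1_r. exact HN. }
  exists (Rabs (g a c) + 2 * INR N).
  intros x y Hx Hy.
  pose (p1 := fun j : nat => a + INR j / INR N * (x - a)).
  pose (p2 := fun j : nat => c + INR j / INR N * (y - c)).
  assert (chain : forall j, (j <= N)%nat -> Rabs (g (p1 j) (p2 j) - g a c) <= 2 * INR j).
  { induction j as [|j IH]; intro Hj.
    - unfold p1, p2. simpl. unfold Rdiv. rewrite !Rmult_0_l, !Rplus_0_r.
      replace (g a c - g a c) with 0 by ring. rewrite Rabs_R0. lra.
    - assert (IH' := IH ltac:(lia)).
      assert (Hj' : INR (S j) <= INR N) by (apply le_INR; lia).
      assert (Hj0 : 0 <= INR j) by apply pos_INR.
      rewrite S_INR in Hj' |- *.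
      assert (q1 : 0 <= INR j / INR N <= 1).
      { split. apply Rdiv_le_0_compat; lra.
        apply Rmult_le_reg_r with (INR N). lra. unfold Rdiv. rewrite Rmult_assoc, Rinv_l by lra. lra. }
      assert (Hstep : Rabs (g (p1 (S j)) (p2 (S j)) - g (p1 j) (p2 j)) < 2).
      { apply close.
        - unfold p1. split.
          + assert (0 <= INR j / INR N * (x - a)) by (apply Rmult_le_pos; lra). lra.
          + assert (INR j / INR N * (x - a) <= 1 * (x - a)) by (apply Rmult_le_compat_r; lra). lra.
        - unfold p2. split.
          + assert (0 <= INR j / INR N * (y - c)) by (apply Rmult_le_pos; lra). lra.
          + assert (INR j / INR N * (y - c) <= 1 * (y - c)) by (apply Rmult_le_compat_r; lra). lra.
        - unfold p1. rewrite S_INR.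
          replace (a + (INR j + 1) / INR N * (x - a) - (a + INR j / INR N * (x - a))) with ((x - a) / INR N) by (field; lra).
          rewrite Rabs_pos_eq by (apply Rdiv_le_0_compat; lra).
          apply Rmult_lt_reg_r with (INR N). lra. unfold Rdiv. rewrite Rmult_assoc, Rinv_l by lra.
          assert (Rabs (b - a) = b - a) by (apply Rabs_pos_eq; lra).
          assert (0 <= Rabs (d - c)) by apply Rabs_pos. lra.
        - unfold p2. rewrite S_INR.
          replace (c + (INR j + 1) / INR N * (y - c) - (c + INR j / INR N * (y - c))) with ((y - c) / INR N) by (field; lra).
          rewrite Rabs_pos_eq by (apply Rdiv_le_0_compat; lra).
          apply Rmult_lt_reg_r with (INR N). lra. unfold Rdiv. rewrite Rmult_assoc, Rinv_l by lra.
          assert (Rabs (d - c) = d - c) by (apply Rabs_pos_eq; lra).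
          assert (0 <= Rabs (b - a)) by apply Rabs_pos. lra. }
      replace (g (p1 (S j)) (p2 (S j)) - g a c) with
        ((g (p1 (S j)) (p2 (S j)) - g (p1 j) (p2 j)) + (g (p1 j) (p2 j) - g a c)) by ring.
      eapply Rle_trans. apply Rabs_triang. lra. }
  assert (E := chain N (le_n N)).
  unfold p1, p2 in E. unfold Rdiv in E. rewrite Rinv_r in E by lra.
  replace (a + 1 * (x - a)) with x in E by ring.
  replace (c + 1 * (y - c)) with y in E by ring.
  replace (g x y) with ((g x y - g a c) + g a c) by ring.
  eapply Rle_trans. apply Rabs_triang. lra.
Qed.

Lemma per_nat (h : R -> R -> R) L : (forall x y, h (x + L) y = h x y) ->
  forall k x y, h (x + INR k * L) y = h x y.
Proof.
  intros Hp k. induction k as [|k IH]; intros x y.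
  - simpl. rewrite Rmult_0_l, Rplus_0_r. reflexivity.
  - rewrite S_INR. replace (x + (INR k + 1) * L) with ((x + INR k * L) + L) by ring.
    rewrite Hp. apply IH.
Qed.

Lemma reduce L x : 0 < L -> exists x' k, 0 <= x' <= L /\ (x = x' + INR k * L \/ x' = x + INR k * L).
Proof.
  intro HL. destruct (archimed (x / L)) as [H1 H2].
  set (z := (up (x / L) - 1)%Z).
  assert (Hz1 : IZR z <= x / L) by (unfold z; rewrite minus_IZR; lra).
  assert (Hz2 : x / L < IZR z + 1) by (unfold z; rewrite minus_IZR; lra).
  assert (A1 : IZR z * L <= x).
  { apply Rmult_le_reg_r with (/ L). apply Rinv_0_lt_compat; lra.
    rewrite Rmult_assoc, Rinv_r by lra. lra. }
  assert (A2 : x < (IZR z + 1) * L).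
  { apply Rmult_lt_reg_r with (/ L). apply Rinv_0_lt_compat; lra.
    rewrite Rmult_assoc, Rinv_r by lra. lra. }
  exists (x - IZR z * L).
  destruct (Z_le_gt_dec 0%Z z) as [Hz|Hz].
  - exists (Z.to_nat z). split. lra. left.
    rewrite INR_IZR_INZ, Z2Nat.id by exact Hz. ring.
  - exists (Z.to_nat (- z)). split. lra. right.
    rewrite INR_IZR_INZ, Z2Nat.id by lia. rewrite opp_IZR. ring.
Qed.

Lemma per_all (h : R -> R -> R) L (P : R -> Prop) K : 0 < L -> (forall x y, h (x + L) y = h x y) ->
  (forall x y, 0 <= x <= L -> P y -> K <= h x y) -> forall x y, P y -> K <= h x y.
Proof.
  intros HL Hp Hb x y Py. destruct (reduce L x HL) as [x' [k [Hx' [E|E]]]].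
  - subst x. rewrite (per_nat h L Hp). auto.
  - assert (h x y = h x' y) by (subst x'; rewrite (per_nat h L Hp); reflexivity).
    rewrite H. auto.
Qed.



Lemma dshift (g : R -> R) x c l : is_derive g (x + c) l -> is_derive (fun t => g (t + c)) x l.
Proof.
  intro H. assert (H2 : is_derive (fun t => t + c) x 1) by (auto_derive; auto; ring).
  assert (H3 := is_derive_comp g (fun t => t + c) x l 1 H H2).
  replace l with (scal 1 l). exact H3. exact (scal_one l).
Qed.

Lemma dmult (f g : R -> R) x a b : is_derive f x a -> is_derive g x b ->
  is_derive (fun t => f t * g t) x (a * g x + f x * b).
Proof. intros H1 H2. apply (is_derive_mult f g x a b H1 H2). intros; apply Rmult_comm. Qed.

Lemma dplus (f g : R -> R) x a b : is_derive f x a -> is_derive g x b ->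
  is_derive (fun t => f t + g t) x (a + b).
Proof. intros H1 H2. apply (is_derive_plus f g x a b H1 H2). Qed.

Lemma dminus (f g : R -> R) x a b : is_derive f x a -> is_derive g x b ->
  is_derive (fun t => f t - g t) x (a - b).
Proof. intros H1 H2. apply (is_derive_minus f g x a b H1 H2). Qed.

Lemma lim_deriv (G G' : R -> R) (L a c : R) (N : nat) (bnd : nat -> R) :
  0 < L ->
  (forall y, a < y -> is_derive G y (G' y)) ->
  (forall y, a < y -> continuity_pt G' y) ->
  a < c - 2 + INR N * L ->
  is_lim_seq bnd 0 ->
  (forall t n, c - 1 < t < c + 1 ->
     Rabs (G (t + INR (n + N) * L) - real (Lim_seq (fun m => G (t + INR (m + N) * L)))) <= bnd n) ->
  (forall t n, c - 1 < t < c + 1 ->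
     Rabs (G' (t + INR (n + N) * L) - real (Lim_seq (fun m => G' (t + INR (m + N) * L)))) <= bnd n) ->
  is_derive (fun y => real (Lim_seq (fun n => G (y + INR n * L)))) c
     (real (Lim_seq (fun n => G' (c + INR n * L)))).
Proof.
  intros HL HG HG' Ha Hb B1 B2.
  pose (gn := fun n t => G (t + INR (n + N) * L)).
  pose (D := fun t => c - 1 < t /\ t < c + 1).
  assert (pos : forall n y, c - 2 < y -> a < y + INR (n + N) * L).
  { intros n y Hy. rewrite plus_INR.
    assert (0 <= INR n * L) by (apply Rmult_le_pos; [apply pos_INR|lra]). nra. }
  assert (Dg : forall n t, c - 2 < t -> is_derive (gn n) t (G' (t + INR (n + N) * L))).
  { intros n t Ht. unfold gn. apply dshift. apply HG. apply pos; exact Ht. }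
  assert (DD : forall n t, c - 2 < t -> Derive (gn n) t = G' (t + INR (n + N) * L)).
  { intros n t Ht. apply is_derive_unique. apply Dg. exact Ht. }
  assert (ev : forall eps : posreal, eventually (fun n => bnd n < eps)).
  { intro eps. apply is_lim_seq_spec in Hb. destruct (Hb eps) as [M HM]. exists M.
    intros n Hn. assert (H := HM n Hn). rewrite Rminus_0_r in H.
    apply Rabs_lt_between in H. lra. }
  assert (H := CVU_Derive gn D).
  assert (Hc : D c) by (unfold D; lra).
  assert (R1 := H (open_and _ _ (open_gt _) (open_lt _))
    ltac:(intros u v x Hu Hv Hx; unfold D in *; lra)).
  clear H.
  assert (R2 : CVU_dom gn D).
  { intro eps. destruct (ev eps) as [M HM]. exists M. intros n Hn t Ht.
    eapply Rle_lt_trans. apply (B1 t n Ht). apply HM; exact Hn. }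
  specialize (R1 R2).
  assert (R3 : forall n x, D x -> ex_derive (gn n) x).
  { intros n x Hx. eexists. apply Dg. unfold D in Hx. lra. }
  specialize (R1 R3).
  assert (R4 : forall n x, D x -> continuity_pt (Derive (gn n)) x).
  { intros n x Hx.
    apply continuity_pt_ext_loc with (f := fun t => G' (t + INR (n + N) * L)).
    - assert (Hl : locally x (fun t => c - 2 < t)).
      { apply (open_gt (c - 2)). unfold D in Hx. lra. }
      destruct Hl as [e He]. exists e. intros y Hy. rewrite DD. reflexivity. apply He; exact Hy.
    - apply (continuity_pt_comp (fun t => t + INR (n + N) * L) G').
      + apply derive_cont with 1. auto_derive; auto; ring.
      + apply HG'. apply pos. unfold D in Hx. lra. }
  specialize (R1 R4).
  assert (R5 : CVU_dom (fun n x => Derive (gn n) x) D).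
  { intro eps. destruct (ev eps) as [M HM]. exists M. intros n Hn t Ht.
    assert (Ht' : c - 2 < t) by (unfold D in Ht; lra).
    rewrite DD by exact Ht'.
    rewrite (Lim_seq_ext (fun n0 => Derive (gn n0) t) (fun m => G' (t + INR (m + N) * L)))
      by (intro m; apply DD; exact Ht').
    eapply Rle_lt_trans. apply (B2 t n Ht). apply HM; exact Hn. }
  specialize (R1 R5 c Hc).
  eapply is_derive_ext; [|
  replace (real (Lim_seq (fun n => G' (c + INR n * L)))) with
     (real (Lim_seq (fun n => Derive (gn n) c))); [exact R1|]].
  - intro y. simpl. unfold gn.
    rewrite (Lim_seq_incr_n (fun n => G (y + INR n * L)) N). reflexivity.
  - rewrite (Lim_seq_ext (fun n => Derive (gn n) c) (fun n => G' (c + INR (n + N) * L)))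
      by (intro m; apply DD; lra).
    rewrite (Lim_seq_incr_n (fun n => G' (c + INR n * L)) N). reflexivity.
Qed.


Lemma exp_le x y : x <= y -> exp x <= exp y.
Proof. intro H. destruct (Rle_lt_or_eq_dec x y H) as [H'|H']. left; apply exp_increasing; exact H'. subst; lra. Qed.

Lemma deq (g : R -> R) (x l l' : R) : is_derive g x l -> l = l' -> is_derive g x l'.
Proof. intros H E; subst; exact H. Qed.

Lemma nat_large L y : 0 < L -> exists N : nat, y <= INR N * L.
Proof.
  intro HL. destruct (reduce L y HL) as [y' [k [Hy [E|E]]]].
  - exists (S k). rewrite S_INR. lra.
  - exists 1%nat. simpl. assert (0 <= INR k * L) by (apply Rmult_le_pos; [apply pos_INR|lra]). lra.
Qed.

Lemma dopp (g : R -> R) (x a : R) : is_derive g x a -> is_derive (fun t => - g t) x (- a).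
Proof. intro H. apply (is_derive_opp g x a H). Qed.

Theorem theorem1
  (L : R) (f df : R -> R -> R) (x0 : R) (phi phi' : R -> R)
  (HL : 0 < L)
  (Hf_cont : forall x y, continuous (fun p : R * R => f (fst p) (snd p)) (x, y))
  (Hf_per : forall x y, f (x + L) y = f x y)
  (Hf_dy : forall x y, is_derive (fun z => f x z) y (df x y))
  (Hdf_cont : forall x y, continuous (fun p : R * R => df (fst p) (snd p)) (x, y))
  (Hphi_sol : forall x, x0 < x ->
      is_derive phi x (phi' x) /\ is_derive phi' x (f x (phi x)))
  (Hphi_x0 : filterlim phi (at_right x0) (locally (phi x0)))
  (Hphi_bdd : exists M, forall x, x0 <= x -> Rabs (phi x) <= M)
  (Hmin : exists m, 0 < m /\
      (exists xs ys, 0 <= xs <= L /\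
         Rbar_le (Glb_Rbar (range_from phi x0)) (Finite ys) /\
         Rbar_le (Finite ys) (Lub_Rbar (range_from phi x0)) /\
         df xs ys = m) /\
      (forall x y, 0 <= x <= L ->
         Rbar_le (Glb_Rbar (range_from phi x0)) (Finite y) ->
         Rbar_le (Finite y) (Lub_Rbar (range_from phi x0)) ->
         m <= df x y)) :
  exists vphi vphi' : R -> R,
    (forall x, is_derive vphi x (vphi' x) /\ is_derive vphi' x (f x (vphi x))) /\
    (forall x, vphi (x + L) = vphi x) /\
    is_lim (fun x => Rabs (phi x - vphi x) + Rabs (phi' x - vphi' x)) p_infty 0.
Proof.
  destruct Hphi_bdd as [M HM].
  destruct Hmin as [m [Hm0 [_ Hmin]]].
  set (E := range_from phi x0) in *.
  assert (HE0 : E (phi x0)) by (exists x0; split; [lra|reflexivity]).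
  assert (HM0 : 0 <= M) by (specialize (HM x0 (Rle_refl _)); pose proof (Rabs_pos (phi x0)); lra).
  assert (HB : exists B, Lub_Rbar E = Finite B).
  { destruct (Lub_Rbar_correct E) as [Hub Hleast].
    destruct (Lub_Rbar E) as [B| |] eqn:Eq.
    - exists B; reflexivity.
    - exfalso. assert (Hl := Hleast (Finite M) ltac:(intros y [x [Hx ->]]; simpl; specialize (HM x Hx); apply Rabs_le_between in HM; lra)). simpl in Hl. exact Hl.
    - exfalso. specialize (Hub _ HE0). simpl in Hub. exact Hub. }
  assert (HA : exists A, Glb_Rbar E = Finite A).
  { destruct (Glb_Rbar_correct E) as [Hlb Hleast].
    destruct (Glb_Rbar E) as [A| |] eqn:Eq.
    - exists A; reflexivity.
    - exfalso. specialize (Hlb _ HE0). simpl in Hlb. exact Hlb.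
    - exfalso. assert (Hl := Hleast (Finite (-M)) ltac:(intros y [x [Hx ->]]; simpl; specialize (HM x Hx); apply Rabs_le_between in HM; lra)). simpl in Hl. exact Hl. }
  destruct HA as [A HA]. destruct HB as [B HB].
  assert (Hrange : forall x, x0 <= x -> A <= phi x <= B).
  { intros x Hx. assert (Ex : E (phi x)) by (exists x; split; [lra|reflexivity]).
    destruct (Lub_Rbar_correct E) as [Hub _]. destruct (Glb_Rbar_correct E) as [Hlb _].
    specialize (Hub _ Ex). specialize (Hlb _ Ex). rewrite HB in Hub. rewrite HA in Hlb.
    simpl in *. lra. }
  clearbody E.
  assert (HAB : A <= B) by (destruct (Hrange x0 (Rle_refl _)); lra).
  assert (Hmin' : forall x y, 0 <= x <= L -> A <= y <= B -> m <= df x y).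
  { intros x y Hx Hy. apply Hmin; [exact Hx| rewrite HA | rewrite HB]; simpl; lra. }
  clear Hmin.
  assert (dfper : forall x y, df (x + L) y = df x y).
  { intros x y. pose proof (Hf_dy (x+L) y) as H. pose proof (Hf_dy x y) as H0.
    apply is_derive_ext with (g := fun z => f x z) in H. 2: intro; apply Hf_per.
    rewrite <- (is_derive_unique _ _ _ H), <- (is_derive_unique _ _ _ H0); reflexivity. }
  assert (dfm : forall x y, A <= y <= B -> m <= df x y)
    by exact (per_all df L (fun y => A <= y <= B) m HL dfper Hmin').
  destruct (rect_bound f Hf_cont 0 L A B) as [K0 HK0].
  assert (fbd : forall x y, A <= y <= B -> Rabs (f x y) <= K0).
  { intros x y Hy.
    assert (H := per_all (fun x y => - Rabs (f x y)) L (fun y => A <= y <= B) (- K0) HL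
      ltac:(intros; simpl; rewrite Hf_per; reflexivity)
      ltac:(intros xx yy Hxx Hyy; simpl; assert (Rabs (f xx yy) <= K0) by auto; lra) x y Hy).
    simpl in H. lra. }
  destruct (rect_bound df Hdf_cont 0 L A B) as [Kd HKd].
  assert (dfbd : forall x y, A <= y <= B -> Rabs (df x y) <= Kd).
  { intros x y Hy.
    assert (H := per_all (fun x y => - Rabs (df x y)) L (fun y => A <= y <= B) (- Kd) HL
      ltac:(intros; simpl; rewrite dfper; reflexivity)
      ltac:(intros xx yy Hxx Hyy; simpl; assert (Rabs (df xx yy) <= Kd) by auto; lra) x y Hy).
    simpl in H. lra. }
  assert (HK0p : 0 <= K0) by (pose proof (fbd 0 A ltac:(lra)); pose proof (Rabs_pos (f 0 A)); lra).
  assert (HKdp : 0 <= Kd) by (pose proof (dfbd 0 A ltac:(lra)); pose proof (Rabs_pos (df 0 A)); lra).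
  assert (mvt : forall t y1 y2, A <= y1 <= B -> A <= y2 <= B ->
     exists xi, A <= xi <= B /\ f t y1 - f t y2 = df t xi * (y1 - y2)).
  { intros t y1 y2 H1 H2.
    destruct (MVT_gen (f t) y2 y1 (df t)) as [xi [Hxi Exi]].
    - intros; apply Hf_dy.
    - intros; apply (derive_cont _ _ _ (Hf_dy t x)).
    - exists xi. split; [|exact Exi].
      assert (A <= Rmin y2 y1) by (apply Rmin_glb; lra).
      assert (Rmax y2 y1 <= B) by (apply Rmax_lub; lra). lra. }
  assert (lip : forall t y1 y2, A <= y1 <= B -> A <= y2 <= B ->
     Rabs (f t y1 - f t y2) <= Kd * Rabs (y1 - y2)).
  { intros t y1 y2 H1 H2. destruct (mvt t y1 y2 H1 H2) as [xi [Hxi ->]].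
    rewrite Rabs_mult. apply Rmult_le_compat_r. apply Rabs_pos. auto. }
  assert (monof : forall t y1 y2, A <= y1 <= B -> A <= y2 <= B ->
     m * ((y1 - y2) * (y1 - y2)) <= (f t y1 - f t y2) * (y1 - y2)).
  { intros t y1 y2 H1 H2. destruct (mvt t y1 y2 H1 H2) as [xi [Hxi ->]].
    assert (m <= df t xi) by auto.
    assert (0 <= (y1 - y2) * (y1 - y2)) by (apply Rle_0_sqr).
    assert (0 <= (df t xi - m) * ((y1 - y2) * (y1 - y2))) by (apply Rmult_le_pos; lra).
    replace (df t xi * (y1 - y2) * (y1 - y2)) with (m * ((y1 - y2) * (y1 - y2)) + (df t xi - m) * ((y1 - y2) * (y1 - y2))) by ring.
    lra. }
  clear mvt Hmin' HK0 HKd.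
  set (x1 := x0 + 1).
  pose (w := fun x => phi (x + L) - phi x).
  pose (w' := fun x => phi' (x + L) - phi' x).
  pose (W2 := fun x => f x (phi (x + L)) - f x (phi x)).
  assert (Dw : forall x, x0 < x -> is_derive w x (w' x)).
  { intros x Hx. apply dminus. apply dshift. apply Hphi_sol; lra. apply Hphi_sol; lra. }
  assert (Dw' : forall x, x0 < x -> is_derive w' x (W2 x)).
  { intros x Hx. apply dminus. apply dshift. unfold W2. rewrite <- (Hf_per x). apply Hphi_sol; lra.
    apply Hphi_sol; lra. }
  assert (wb : forall x, x0 <= x -> Rabs (w x) <= 2 * M).
  { intros x Hx. unfold w. eapply Rle_trans. apply Rabs_triang. rewrite Rabs_Ropp.
    assert (Rabs (phi (x + L)) <= M) by (apply HM; lra). assert (Rabs (phi x) <= M) by auto. lra. }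
  assert (W2b : forall x, x0 <= x -> Rabs (W2 x) <= 2 * K0).
  { intros x Hx. unfold W2. eapply Rle_trans. apply Rabs_triang. rewrite Rabs_Ropp.
    assert (Rabs (f x (phi (x + L))) <= K0) by (apply fbd; apply Hrange; lra).
    assert (Rabs (f x (phi x)) <= K0) by (apply fbd; apply Hrange; lra). lra. }
  assert (wW2 : forall x, x0 <= x -> m * (w x * w x) <= w x * W2 x).
  { intros x Hx. unfold w, W2.
    replace ((phi (x + L) - phi x) * (f x (phi (x + L)) - f x (phi x))) with
      ((f x (phi (x + L)) - f x (phi x)) * (phi (x + L) - phi x)) by ring.
    apply monof; apply Hrange; lra. }
  pose (z := fun x => w x * w x).
  pose (z' := fun x => 2 * (w x * w' x)).
  pose (z'' := fun x => 2 * (w' x * w' x + w x * W2 x)).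
  assert (Dz : forall x, x0 < x -> is_derive z x (z' x)).
  { intros x Hx. apply (deq _ _ (w' x * w x + w x * w' x)).
    apply dmult; apply Dw; exact Hx. unfold z'; cbv beta; ring. }
  assert (Dz' : forall x, x0 < x -> is_derive z' x (z'' x)).
  { intros x Hx. apply (deq _ _ (2 * (w' x * w' x + w x * W2 x))).
    apply is_derive_scal. apply dmult. apply Dw; exact Hx. apply Dw'; exact Hx.
    unfold z''; cbv beta; ring. }
  assert (zb : forall x, x0 <= x -> 0 <= z x <= 4 * M * M).
  { intros x Hx. assert (H := wb x Hx). apply Rabs_le_between in H. unfold z. split.
    apply Rle_0_sqr. nra. }
  assert (z''p : forall x, x0 <= x -> 2 * m * z x <= z'' x).
  { intros x Hx. assert (H := wW2 x Hx). assert (0 <= w' x * w' x) by apply Rle_0_sqr.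
    unfold z'', z. lra. }
  assert (Hzp : forall x, x0 <= x -> 0 <= z x) by (intros; apply zb; auto).
  assert (z'neg : forall x, x0 < x -> z' x <= 0).
  { intros xa Hxa. apply Rnot_lt_le. intro Hs. set (s := z' xa) in *.
    assert (inc : forall t, xa <= t -> s <= z' t).
    { intros t Ht. apply (mono_le z' z'' xa).
      - intros; apply Dz'; lra.
      - intros y Hy. assert (H := z''p y ltac:(lra)). assert (0 <= z y) by (apply Hzp; lra).
        nra.
      - lra.
      - exact Ht. }
    assert (lin : forall t, xa <= t -> z xa - s * xa <= z t - s * t).
    { intros t Ht. apply (mono_le (fun t => z t - s * t) (fun t => z' t - s) xa).
      - intros y Hy. apply dminus. apply Dz; lra. eapply deq. apply is_derive_scal. apply (is_derive_id y).
        simpl. unfold one; simpl. ring.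
      - intros y Hy. assert (H := inc y Hy). lra.
      - lra.
      - exact Ht. }
    set (t := xa + (4 * M * M + 1) / s).
    assert (Ht : xa <= t).
    { unfold t. assert (0 < (4 * M * M + 1) / s) by (apply Rdiv_lt_0_compat; nra). lra. }
    assert (H := lin t Ht).
    assert (E1 : s * t = s * xa + (4 * M * M + 1)) by (unfold t; field; lra).
    assert (zb1 := zb t ltac:(lra)). assert (zb2 := zb xa ltac:(lra)). lra. }
  set (k := Rmin 1 m).
  assert (Hk0 : 0 < k) by (apply Rmin_glb_lt; lra).
  assert (Hk1 : k <= 1) by apply Rmin_l.
  assert (Hkm : k <= m) by apply Rmin_r.
  assert (Hkk : k * k <= m) by nra.
  assert (dexpk : forall a t, is_derive (fun t => exp (a * t)) t (a * exp (a * t))).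
  { intros a t. auto_derive. auto. ring. }
  assert (pneg : forall x, x0 < x -> z' x + k * z x <= 0).
  { intros xa Hxa. apply Rnot_lt_le. intro Hp. set (p0 := z' xa + k * z xa) in *.
    assert (inc : forall t, xa <= t -> p0 * exp (- k * xa) <= (z' t + k * z t) * exp (- k * t)).
    { intros t Ht.
      apply (mono_le (fun t => (z' t + k * z t) * exp (- k * t))
                     (fun t => (z'' t - k * k * z t) * exp (- k * t)) xa).
      - intros y Hy. apply (deq _ _ ((z'' y + k * z' y) * exp (- k * y) + (z' y + k * z y) * (- k * exp (- k * y)))).
        apply (dmult (fun t => z' t + k * z t) (fun t => exp (- k * t))).
        + apply dplus. apply Dz'; lra. apply is_derive_scal. apply Dz; lra.
        + apply (dexpk (- k) y).
        + ring.
      - intros y Hy. apply Rmult_le_pos. assert (H := z''p y ltac:(lra)).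
        assert (0 <= z y) by (apply Hzp; lra). nra. left; apply exp_pos.
      - lra.
      - exact Ht. }
    set (t := xa + (4 * k * M * M + 1) / (p0 * k)).
    assert (Ht : xa <= t).
    { unfold t. assert (0 < (4 * k * M * M + 1) / (p0 * k)).
      { apply Rdiv_lt_0_compat. assert (0 <= k * M * M) by (apply Rmult_le_pos; nra). nra. nra. }
      lra. }
    assert (H := inc t Ht).
    assert (H2 : p0 * exp (k * (t - xa)) <= z' t + k * z t).
    { assert (H3 := Rmult_le_compat_r (exp (k * t)) _ _ (Rlt_le _ _ (exp_pos (k * t))) H).
      rewrite Rmult_assoc, Rmult_assoc, <- !exp_plus in H3.
      replace (- k * t + k * t) with 0 in H3 by ring. rewrite exp_0, Rmult_1_r in H3.
      replace (- k * xa + k * t) with (k * (t - xa)) in H3 by ring. exact H3. }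
    assert (H4 := exp_ineq1_le (k * (t - xa))).
    assert (H5 : p0 * (1 + k * (t - xa)) <= p0 * exp (k * (t - xa))) by (apply Rmult_le_compat_l; lra).
    assert (E1 : p0 * (k * (t - xa)) = 4 * k * M * M + 1) by (unfold t; field; split; lra).
    assert (zt := zb t ltac:(lra)). assert (z't := z'neg t ltac:(lra)).
    assert (k * z t <= k * (4 * M * M)) by (apply Rmult_le_compat_l; lra).
    nra. }
  assert (zdec : forall t, x1 <= t -> z t <= 4 * M * M * exp (- k * (t - x1))).
  { intros t Ht.
    assert (H : - (z x1 * exp (k * x1)) <= - (z t * exp (k * t))).
    { apply (mono_le (fun t => - (z t * exp (k * t))) (fun t => - ((z' t + k * z t) * exp (k * t))) x1).
      - intros y Hy. apply (deq _ _ (- (z' y * exp (k * y) + z y * (k * exp (k * y))))).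
        + apply dopp. apply (dmult z (fun t => exp (k * t))). apply Dz; unfold x1 in Hy; lra. apply (dexpk k y).
        + ring.
      - intros y Hy. assert (H := pneg y ltac:(unfold x1 in Hy; lra)).
        assert (0 < exp (k * y)) by apply exp_pos. nra.
      - lra.
      - exact Ht. }
    assert (E1 : z t = z t * exp (k * t) * exp (- k * (t - x1)) * exp (- k * x1)).
    { rewrite !Rmult_assoc, <- !exp_plus. replace (k * t + (- k * (t - x1) + - k * x1)) with 0 by ring.
      rewrite exp_0; ring. }
    assert (z t * exp (k * t) <= z x1 * exp (k * x1)) by lra.
    assert (zx1 := zb x1 ltac:(unfold x1; lra)).
    assert (E2 : exp (k * x1) * exp (- k * x1) = 1).
    { rewrite <- exp_plus. replace (k * x1 + - k * x1) with 0 by ring. apply exp_0. }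
    assert (P1 := exp_pos (- k * (t - x1))). assert (P2 := exp_pos (- k * x1)).
    assert (z t <= z x1 * exp (k * x1) * exp (- k * (t - x1)) * exp (- k * x1)).
    { rewrite E1. apply Rmult_le_compat_r. lra. apply Rmult_le_compat_r. lra. assumption. }
    replace (z x1 * exp (k * x1) * exp (- k * (t - x1)) * exp (- k * x1)) with
      (z x1 * exp (- k * (t - x1)) * (exp (k * x1) * exp (- k * x1))) in H1 by ring.
    rewrite E2, Rmult_1_r in H1. nra. }
  assert (wdec : forall t, x1 <= t -> Rabs (w t) <= 2 * M * exp (- k * (t - x1) / 2)).
  { intros t Ht. assert (H := zdec t Ht).
    assert (E1 : exp (- k * (t - x1)) = exp (- k * (t - x1) / 2) * exp (- k * (t - x1) / 2)).
    { rewrite <- exp_plus. f_equal. field. }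
    assert (P := exp_pos (- k * (t - x1) / 2)).
    unfold z in H. rewrite E1 in H.
    assert (0 <= 2 * M * exp (- k * (t - x1) / 2)) by nra.
    apply Rabs_le_between. split; nra. }
  set (lam := k / 4).
  assert (Hlam : 0 < lam) by (unfold lam; lra).
  pose (h := fun t => exp (- lam * (t - x1))).
  assert (hpos : forall t, 0 < h t) by (intro; apply exp_pos).
  assert (hle1 : forall t, x1 <= t -> h t <= 1).
  { intros t Ht. unfold h. rewrite <- exp_0. apply exp_le. nra. }
  assert (hdec : forall t t', t <= t' -> h t' <= h t).
  { intros t t' Ht. unfold h. apply exp_le. nra. }
  set (D0 := 4 * M + 2 * K0).
  assert (HD0 : 0 <= D0) by (unfold D0; lra).
  assert (wE : forall t, x1 <= t -> Rabs (w t) <= D0 * h t /\ Rabs (w' t) <= D0 * h t).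
  { intros t Ht. set (ht := h t).
    assert (Hht : 0 < ht) by apply hpos. assert (Hht1 : ht <= 1) by (apply hle1; exact Ht).
    assert (e2 : forall u, exp (- k * (u - x1) / 2) = h u * h u).
    { intro u. unfold h. rewrite <- exp_plus. f_equal. unfold lam. field. }
    assert (Hw1 : Rabs (w t) <= 2 * M * (ht * ht)) by (unfold ht; rewrite <- e2; apply wdec; exact Ht).
    assert (Hw2 : Rabs (w (t + ht)) <= 2 * M * (ht * ht)).
    { eapply Rle_trans. apply wdec. lra. rewrite e2. fold ht.
      assert (h (t + ht) <= ht) by (apply hdec; lra).
      assert (0 < h (t + ht)) by apply hpos.
      apply Rmult_le_compat_l. lra. apply Rmult_le_compat; lra. }
    split.
    { assert (ht * ht <= 1 * ht) by (apply Rmult_le_compat_r; lra).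
      assert (2 * M * (ht * ht) <= 2 * M * ht) by (apply Rmult_le_compat_l; lra).
      assert (0 <= 2 * K0 * ht) by (apply Rmult_le_pos; lra).
      unfold D0. replace ((4 * M + 2 * K0) * ht) with (2 * (2 * M * ht) + 2 * K0 * ht) by ring.
      assert (0 <= 2 * M * ht) by (apply Rmult_le_pos; lra). lra. }
    destruct (MVT_gen w t (t + ht) w') as [xi [Hxi Exi]].
    { intros y Hy. rewrite Rmin_left in Hy by lra. apply Dw. unfold x1 in Ht. lra. }
    { intros y Hy. rewrite Rmin_left in Hy by lra. apply (derive_cont _ _ _ (Dw y ltac:(unfold x1 in Ht; lra))). }
    rewrite Rmin_left in Hxi by lra. rewrite Rmax_right in Hxi by lra.
    destruct (MVT_gen w' t xi W2) as [eta [Heta Eeta]].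
    { intros y Hy. rewrite Rmin_left in Hy by lra. apply Dw'. unfold x1 in Ht. lra. }
    { intros y Hy. rewrite Rmin_left in Hy by lra. apply (derive_cont _ _ _ (Dw' y ltac:(unfold x1 in Ht; lra))). }
    rewrite Rmin_left in Heta by lra. rewrite Rmax_right in Heta by lra.
    assert (HW := W2b eta ltac:(unfold x1 in Ht; lra)).
    assert (B1 : Rabs (w' xi - w' t) <= 2 * K0 * ht).
    { rewrite Eeta, Rabs_mult. rewrite (Rabs_pos_eq (xi - t)) by lra.
      apply Rmult_le_compat; try lra. apply Rabs_pos. }
    assert (B2 : Rabs (w' xi) * ht <= 4 * M * (ht * ht)).
    { replace ht with (t + ht - t) at 1 by ring. rewrite <- (Rabs_pos_eq (t + ht - t)) by lra.
      rewrite <- Rabs_mult, <- Exi. eapply Rle_trans. apply Rabs_triang. rewrite Rabs_Ropp. lra. }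
    assert (B3 : Rabs (w' xi) <= 4 * M * ht).
    { apply Rmult_le_reg_r with ht. exact Hht. nra. }
    replace (w' t) with (w' xi - (w' xi - w' t)) by ring.
    eapply Rle_trans. apply Rabs_triang. rewrite Rabs_Ropp. unfold D0.
    replace ((4 * M + 2 * K0) * ht) with (4 * M * ht + 2 * K0 * ht) by ring. lra. }
  set (r := exp (- lam * L)).
  assert (Hr : 0 < r < 1).
  { split. apply exp_pos. unfold r. rewrite <- exp_0. apply exp_increasing. nra. }
  assert (hmul : forall t n, h (t + INR n * L) = h t * r ^ n).
  { intros t n. induction n as [|n IH].
    - simpl. rewrite Rmult_0_l, Rplus_0_r. ring.
    - rewrite S_INR. simpl pow. replace (t + (INR n + 1) * L) with ((t + INR n * L) + L) by ring.
      unfold h in *. replace (- lam * (t + INR n * L + L - x1)) with (- lam * (t + INR n * L - x1) + - lam * L) by ring.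
      rewrite exp_plus, IH. unfold r. ring. }
  assert (Lp : forall G : R -> R, (forall t, x1 <= t -> Rabs (G (t + L) - G t) <= D0 * h t) ->
     forall s, x1 <= s -> ex_finite_lim_seq (fun n => G (s + INR n * L)) /\
       (forall n, Rabs (real (Lim_seq (fun n => G (s + INR n * L))) - G (s + INR n * L)) <= D0 / (1 - r) * r ^ n) /\
       (forall n, Rabs (real (Lim_seq (fun n => G (s + INR n * L))) - G (s + INR n * L)) <= D0 * h s * r ^ n / (1 - r))).
  { intros G HG s Hs.
    destruct (geom_lim (fun n => G (s + INR n * L)) (D0 * h s) r) as [Hex Hb].
    - apply Rmult_le_pos. lra. left; apply hpos.
    - lra.
    - intro n. rewrite S_INR. replace (s + (INR n + 1) * L) with ((s + INR n * L) + L) by ring.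
      eapply Rle_trans. apply HG.
      assert (0 <= INR n * L) by (apply Rmult_le_pos; [apply pos_INR|lra]). lra.
      rewrite hmul. rewrite Rmult_assoc. apply Rle_refl.
    - split. exact Hex. split; [|exact Hb]. intro n. eapply Rle_trans. apply Hb.
      assert (hs := hle1 s Hs). assert (0 < h s) by apply hpos.
      assert (0 <= r ^ n) by (apply pow_le; lra).
      assert (0 < 1 - r) by lra.
      replace (D0 * h s * r ^ n / (1 - r)) with (h s * (D0 * r ^ n / (1 - r))) by (field; lra).
      replace (D0 / (1 - r) * r ^ n) with (1 * (D0 * r ^ n / (1 - r))) by (field; lra).
      apply Rmult_le_compat_r. apply Rdiv_le_0_compat. apply Rmult_le_pos; lra. lra. exact hs. }
  assert (LpP := Lp phi (fun t Ht => proj1 (wE t Ht))).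
  assert (LpP' := Lp phi' (fun t Ht => proj2 (wE t Ht))).
  clear Lp.
  pose (psi := fun x => real (Lim_seq (fun n => phi (x + INR n * L)))).
  pose (psi' := fun x => real (Lim_seq (fun n => phi' (x + INR n * L)))).
  assert (shift : forall (G : R -> R) x N, real (Lim_seq (fun n => G (x + INR N * L + INR n * L))) = real (Lim_seq (fun n => G (x + INR n * L)))).
  { intros G x N. rewrite <- (Lim_seq_incr_n (fun n => G (x + INR n * L)) N). f_equal. apply Lim_seq_ext.
    intro n. rewrite plus_INR. f_equal. ring. }
  assert (nLpos : forall n, 0 <= INR n * L) by (intro n; apply Rmult_le_pos; [apply pos_INR|lra]).
  assert (limval : forall s, x1 <= s -> is_lim_seq (fun n => phi (s + INR n * L)) (psi s) /\ A <= psi s <= B).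
  { intros s Hs. destruct (LpP s Hs) as [[l Hl] _].
    assert (E1 : psi s = l) by (unfold psi; rewrite (is_lim_seq_unique _ _ Hl); reflexivity).
    rewrite E1. split. exact Hl. split.
    - assert (H := is_lim_seq_le (fun _ => A) _ A l (fun n => proj1 (Hrange (s + INR n * L) ltac:(specialize (nLpos n); unfold x1 in Hs; lra))) (is_lim_seq_const A) Hl). exact H.
    - assert (H := is_lim_seq_le _ (fun _ => B) l B (fun n => proj2 (Hrange (s + INR n * L) ltac:(specialize (nLpos n); unfold x1 in Hs; lra))) Hl (is_lim_seq_const B)). exact H. }
  assert (idx : forall t n N, t + INR (n + N) * L = (t + INR N * L) + INR n * L).
  { intros. rewrite plus_INR. ring. }
  assert (ODE : forall c, is_derive psi c (psi' c) /\ is_derive psi' c (f c (psi c))).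
  { intro c. destruct (nat_large L (x1 - c + 2) HL) as [N HN].
    pose (bnd := fun n => (1 + Kd) * (D0 / (1 - r)) * r ^ n).
    assert (Hbnd : is_lim_seq bnd 0).
    { assert (H := is_lim_seq_scal_l (fun n => r ^ n) ((1 + Kd) * (D0 / (1 - r))) 0
        (is_lim_seq_geom r ltac:(rewrite Rabs_pos_eq; lra))).
      simpl in H. rewrite Rmult_0_r in H. exact H. }
    assert (bndge : forall n, D0 / (1 - r) * r ^ n <= bnd n /\ Kd * (D0 / (1 - r) * r ^ n) <= bnd n).
    { intro n. unfold bnd. assert (0 <= D0 / (1 - r) * r ^ n).
      { apply Rmult_le_pos. apply Rdiv_le_0_compat; lra. apply pow_le; lra. }
      rewrite Rmult_assoc. split; nra. }
    assert (sge : forall t, c - 1 < t < c + 1 -> x1 <= t + INR N * L) by (intros; lra).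
    split.
    - apply (lim_deriv phi phi' L x0 c N bnd HL).
      + intros y Hy; apply Hphi_sol; auto.
      + intros y Hy; apply (derive_cont _ _ _ (proj2 (Hphi_sol y Hy))).
      + unfold x1 in HN. lra.
      + exact Hbnd.
      + intros t n Ht. rewrite idx.
        rewrite (Lim_seq_ext _ (fun m => phi (t + INR N * L + INR m * L))) by (intro; rewrite idx; reflexivity).
        rewrite Rabs_minus_sym. eapply Rle_trans. apply (proj1 (proj2 (LpP (t + INR N * L) (sge t Ht)))).
        apply bndge.
      + intros t n Ht. rewrite idx.
        rewrite (Lim_seq_ext _ (fun m => phi' (t + INR N * L + INR m * L))) by (intro; rewrite idx; reflexivity).
        rewrite Rabs_minus_sym. eapply Rle_trans. apply (proj1 (proj2 (LpP' (t + INR N * L) (sge t Ht)))).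
        apply bndge.
    - assert (H := lim_deriv phi' (fun y => f y (phi y)) L x0 c N bnd HL).
      apply (deq psi' c (real (Lim_seq (fun n => f (c + INR n * L) (phi (c + INR n * L)))))).
      + apply H.
        * intros y Hy; apply Hphi_sol; auto.
        * intros y Hy. apply continuity_pt_filterlim.
          assert (Hc1 : continuous phi y).
          { apply (ex_derive_continuous phi y). eexists. apply (Hphi_sol y Hy). }
          exact (continuous_comp_2 (fun y => y) phi f y (continuous_id y) Hc1 (Hf_cont y (phi y))).
        * unfold x1 in HN. lra.
        * exact Hbnd.
        * intros t n Ht. rewrite idx.
          rewrite (Lim_seq_ext _ (fun m => phi' (t + INR N * L + INR m * L))) by (intro; rewrite idx; reflexivity).
          rewrite Rabs_minus_sym. eapply Rle_trans. apply (proj1 (proj2 (LpP' (t + INR N * L) (sge t Ht)))).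
          apply bndge.
        * intros t n Ht. set (s := t + INR N * L).
          rewrite (per_nat f L Hf_per).
          rewrite (Lim_seq_ext _ (fun m => f t (phi (s + INR m * L))))
            by (intro mm; rewrite (per_nat f L Hf_per); rewrite idx; reflexivity).
          rewrite idx. fold s.
          destruct (limval s (sge t Ht)) as [Hl Hab].
          rewrite (is_lim_seq_unique _ _ (is_lim_seq_continuous (f t) _ (psi s) (derive_cont _ _ _ (Hf_dy t (psi s))) Hl)).
          simpl. eapply Rle_trans. apply lip.
          apply Hrange. specialize (nLpos n). unfold s, x1 in *. specialize (sge t Ht). lra.
          exact Hab.
          eapply Rle_trans. apply Rmult_le_compat_l. exact HKdp.
          rewrite Rabs_minus_sym. apply (proj1 (proj2 (LpP s (sge t Ht)))).
          apply bndge.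
      + rewrite (Lim_seq_ext _ (fun n => f c (phi (c + INR n * L)))) by (intro; apply (per_nat f L Hf_per)).
        rewrite <- (shift (fun y => f c (phi y)) c N).
        assert (Hs : x1 <= c + INR N * L) by lra.
        destruct (limval _ Hs) as [Hl _].
        rewrite (is_lim_seq_unique _ _ (is_lim_seq_continuous (f c) _ _ (derive_cont _ _ _ (Hf_dy c _)) Hl)).
        simpl. f_equal. unfold psi. apply shift. }
  exists psi, psi'. split; [exact ODE|]. split.
  { intro x. unfold psi. rewrite <- (shift phi x 1%nat). f_equal. apply Lim_seq_ext. intro n.
    f_equal. simpl. ring. }
  apply is_lim_spec. intro eps.
  set (C := 2 * (D0 / (1 - r))).
  assert (HC : 0 <= C) by (unfold C; apply Rmult_le_pos; [lra| apply Rdiv_le_0_compat; lra]).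
  assert (He : 0 < eps) by apply cond_pos.
  exists (x1 + C / (lam * eps)). intros x Hx.
  assert (Hq : 0 <= C / (lam * eps)) by (apply Rdiv_le_0_compat; [lra| apply Rmult_lt_0_compat; lra]).
  assert (Hx1 : x1 <= x) by lra.
  assert (b1 := proj2 (proj2 (LpP x Hx1)) 0%nat).
  assert (b2 := proj2 (proj2 (LpP' x Hx1)) 0%nat).
  replace (x + INR 0 * L) with x in b1, b2 by (simpl; ring).
  fold (psi x) in b1. fold (psi' x) in b2. simpl pow in b1, b2.
  rewrite Rabs_minus_sym in b1, b2.
  rewrite Rminus_0_r. rewrite Rabs_pos_eq by (apply Rplus_le_le_0_compat; apply Rabs_pos).
  assert (Hsum : Rabs (phi x - psi x) + Rabs (phi' x - psi' x) <= C * h x).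
  { replace (C * h x) with (D0 * h x * 1 / (1 - r) + D0 * h x * 1 / (1 - r)) by (unfold C; field; lra). lra. }
  set (u := lam * (x - x1)).
  assert (Hu : C < eps * u).
  { unfold u. assert (x - x1 > C / (lam * eps)) by lra.
    assert (Hq2 := Rmult_lt_compat_l (lam * eps) _ _ ltac:(apply Rmult_lt_0_compat; lra) H).
    replace (lam * eps * (C / (lam * eps))) with C in Hq2 by (field; lra). lra. }
  assert (Hhu : h x * (1 + u) <= 1).
  { assert (H1 := exp_ineq1_le u). assert (H2 : h x * exp u = 1).
    { unfold h, u. rewrite <- exp_plus. replace (- lam * (x - x1) + lam * (x - x1)) with 0 by ring. apply exp_0. }
    assert (0 < h x) by apply hpos. nra. }
  assert (0 < h x) by apply hpos.
  assert (0 <= u) by (unfold u; nra).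
  assert (C * h x * (1 + u) <= C) by nra.
  assert (C * h x < eps) by nra.
  lra.
Qed.
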